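(* Let $k > 0$, let $\mathcal{J} \subseteq \{1,\dots,n\}$ be nonempty, let ${\mathbf{x}}^* = k\sum_{j\in\mathcal{J}} {\mathbf{e}}_j$, and suppose there is a vector ${\mathbf{c}}$ with $$\frac{P {\mathbf{e}}_j}{\| P {\mathbf{e}}_j \|_2} \cdot {\mathbf{c}} = 1 \ \ \forall j \in \mathcal{J}, \qquad \frac{P {\mathbf{e}}_i}{\| P {\mathbf{e}}_i \|_2} \cdot {\mathbf{c}} < 1 \ \ \forall i \in \mathcal{J}^c.$$ Define $g: S \to \mathbb{R}$ by $$g(s) = \min_{0 \leq {\mathbf{x}} \leq s} \| W {\mathbf{x}} \|_1 \quad \text{subject to} \quad A {\mathbf{x}} = A {\mathbf{x}}^*.$$ Then $g$ is non-increasing in $s$, and $$g(s) > \|W{\mathbf{x}}^*\|_1 \ \text{ for } s \in [0,k)\cap S, \qquad g(s) = \|W{\mathbf{x}}^*\|_1 \ \text{ for } s \geq k.$$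
   Context: $A \in \mathbb{R}^{m\times n}$ is a matrix, $A^\dagger$ its Moore–Penrose pseudoinverse, and $P = A^\dagger A$ the orthogonal projection onto $\mathcal{N}(A)^\perp$. ${\mathbf{e}}_1,\dots,{\mathbf{e}}_n$ are the standard unit vectors, assumed not to lie in $\mathcal{N}(A)$, so $w_i := \|P{\mathbf{e}}_i\|_2 > 0$; $W = \mathrm{diag}(w_1,\dots,w_n)$. $S$ is the set of $s \ge 0$ for which there exists ${\mathbf{x}}\in\mathbb{R}^n$ with $0 \le {\mathbf{x}} \le s$ (componentwise) and $A{\mathbf{x}} = A{\mathbf{x}}^*$, i.e., the values of $s$ for which the constraint set defining $g(s)$ is nonempty. *)

(* Defs.v *)
From HB Require Import structures.
From mathcomp Require Import all_boot all_order all_algebra.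
From mathcomp Require Import classical_sets reals.
Set Implicit Arguments. Unset Strict Implicit. Unset Printing Implicit Defensive.
Import Order.TTheory GRing.Theory Num.Theory.
Local Open Scope ring_scope.
Local Open Scope classical_set_scope.

(* Moore–Penrose pseudoinverse: Ad is the pseudoinverse of A iff it satisfies
   the four Penrose equations (real case: conjugate transpose = transpose). *)
Definition is_pinv (R : realType) (m n : nat) (A : 'M[R]_(m, n)) (Ad : 'M[R]_(n, m)) : Prop :=
  [/\ A *m Ad *m A = A, Ad *m A *m Ad = Ad,
      (A *m Ad)^T = A *m Ad & (Ad *m A)^T = Ad *m A].

Definition evec (R : realType) (n : nat) (i : 'I_n) : 'cV[R]_n := delta_mx i 0.

Definition dotv (R : realType) (n : nat) (u v : 'cV[R]_n) : R :=
  \sum_(k < n) u k 0 * v k 0.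

Definition norm2 (R : realType) (n : nat) (v : 'cV[R]_n) : R := Num.sqrt (dotv v v).

Definition norm1 (R : realType) (n : nat) (v : 'cV[R]_n) : R := \sum_(k < n) `|v k 0|.

Definition Wmat (R : realType) (n : nat) (P : 'M[R]_n) : 'M[R]_n :=
  diag_mx (\row_(i < n) norm2 (P *m evec R i)).

Definition box (R : realType) (n : nat) (s : R) (x : 'cV[R]_n) : Prop :=
  forall i, 0 <= x i 0 <= s.

Definition feas (R : realType) (m n : nat) (A : 'M[R]_(m, n)) (xs : 'cV[R]_n) (s : R)
  : set 'cV[R]_n := [set x | box s x /\ A *m x = A *m xs].

(* S: the s >= 0 for which the feasible set is nonempty *)
Definition Sset (R : realType) (m n : nat) (A : 'M[R]_(m, n)) (xs : 'cV[R]_n) : set R :=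
  [set s | 0 <= s /\ exists x, feas A xs s x].

(* g(s) = min { ||W x||_1 : 0 <= x <= s, A x = A xs } (written as an infimum;
   the minimum is attained on S) *)
Definition gfun (R : realType) (m n : nat) (A : 'M[R]_(m, n)) (W : 'M[R]_n)
  (xs : 'cV[R]_n) (s : R) : R :=
  inf [set norm1 (W *m x) | x in feas A xs s].

(* Main.v *)
Require Import Defs.
From HB Require Import structures.
From mathcomp Require Import all_boot all_order all_algebra.
From mathcomp Require Import classical_sets reals lra.
Import Order.TTheory GRing.Theory Num.Theory.
Local Open Scope ring_scope.
Local Open Scope classical_set_scope.

Lemma dotvE (R : realType) n (u v : 'cV[R]_n) : dotv u v = (u^T *m v) 0 0.
Proof. by rewrite /dotv mxE; apply: eq_bigr => i _; rewrite mxE. Qed.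

Lemma dotvZ (R : realType) n a (u v : 'cV[R]_n) : dotv (a *: u) v = a * dotv u v.
Proof. by rewrite /dotv mulr_sumr; apply: eq_bigr => i _; rewrite mxE mulrA. Qed.

Lemma norm2_gt0 (R : realType) n (v : 'cV[R]_n) : v != 0 -> 0 < norm2 v.
Proof.
move=> nz; rewrite /norm2 sqrtr_gt0 lt_def; apply/andP; split; last first.
  by apply: sumr_ge0 => i _; rewrite -expr2 sqr_ge0.
apply/negP => /eqP H; move/negP: nz; apply; apply/eqP/matrixP => i j.
rewrite (ord1 j) mxE.
have H2 : v i 0 * v i 0 = 0.
  apply: (@psumr_eq0P R _ xpredT (fun k => v k 0 * v k 0)) => //.
  by move=> k _; rewrite -expr2 sqr_ge0.
by move/eqP: H2; rewrite mulf_eq0 orbb => /eqP.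
Qed.

Lemma Pe_dot (R : realType) n (P : 'M[R]_n) (c : 'cV[R]_n) i :
  P^T = P -> dotv (P *m evec R i) c = (P *m c) i 0.
Proof.
move=> Ps; rewrite dotvE trmx_mul Ps /evec trmx_delta -mulmxA -rowE mxE.
by [].
Qed.

Lemma norm1E (R : realType) n (v : 'cV[R]_n) : norm1 v = \sum_i `|v i 0|.
Proof. by []. Qed.

Theorem corollary4 (R : realType) (m n : nat) (A : 'M[R]_(m, n)) (Ad : 'M[R]_(n, m))
  (hAd : is_pinv A Ad)
  (hnull : forall i : 'I_n, A *m evec R i != 0)
  (k : R) (hk : 0 < k) (J : {set 'I_n}) (hJ : J != finset.set0)
  (c : 'cV[R]_n)
  (hcJ : forall j, j \in J ->
     dotv ((norm2 ((Ad *m A) *m evec R j))^-1 *: ((Ad *m A) *m evec R j)) c = 1)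
  (hcJc : forall i, i \notin J ->
     dotv ((norm2 ((Ad *m A) *m evec R i))^-1 *: ((Ad *m A) *m evec R i)) c < 1) :
  let P := Ad *m A in
  let W := Wmat P in
  let xs := k *: \sum_(j in J) evec R j in
  let S := Sset A xs in
  let g := gfun A W xs in
  (forall s1 s2, S s1 -> S s2 -> s1 <= s2 -> g s2 <= g s1) /\
  (forall s, S s -> s < k -> norm1 (W *m xs) < g s) /\
  (forall s, k <= s -> g s = norm1 (W *m xs)).
Proof.
move=> P W xs S g.
case: hAd => h1 h2 h3 h4.
have APA : A *m P = A by rewrite /P mulmxA.
have Psym : P^T = P by [].
pose w i := norm2 (P *m evec R i).
pose u := P *m c.
have wpos : forall i, 0 < w i.
  move=> i; apply: norm2_gt0; apply/negP => /eqP H.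
  by move/negP: (hnull i); apply; rewrite -APA -mulmxA H mulmx0.
have uJ : forall j, j \in J -> u j 0 = w j.
  move=> j /hcJ; rewrite dotvZ Pe_dot // -/P -/(w j) => H.
  have := wpos j => wp.
  have -> : u j 0 = w j * ((w j)^-1 * u j 0) by rewrite mulrA divff ?mul1r // gt_eqF.
  by rewrite H mulr1.
have uJc : forall i, i \notin J -> u i 0 < w i.
  move=> i /hcJc; rewrite dotvZ Pe_dot // -/P -/(w i) => H.
  have := wpos i => wp.
  have wi : 0 < (w i)^-1 by rewrite invr_gt0.
  by rewrite -(ltr_pM2l wi) mulVf ?gt_eqF.
have uw : forall i, u i 0 <= w i.
  by move=> i; case: (boolP (i \in J)) => H; [rewrite uJ | apply/ltW/uJc].
have xsE : forall i, xs i 0 = if i \in J then k else 0.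
  move=> i; rewrite /xs mxE summxE.
  case: ifP => iJ.
    rewrite (bigD1 i) //= big1 ?addr0 /evec ?mxE ?eqxx ?mulr1 //.
    by move=> j /andP [_ ji]; rewrite /evec mxE eq_sym (negbTE ji).
  rewrite big1 ?mulr0 // => j jJ; rewrite /evec mxE.
  by case: eqP => // ij; rewrite ij jJ in iJ.
have Wx : forall (x : 'cV[R]_n) i, (W *m x) i 0 = w i * x i 0.
  by move=> x i; rewrite /W /Wmat mul_diag_mx !mxE.
have key : forall x : 'cV[R]_n, A *m x = A *m xs ->
    \sum_i u i 0 * x i 0 = \sum_i u i 0 * xs i 0.
  move=> x Hx.
  have E : forall y : 'cV[R]_n, \sum_i u i 0 * y i 0 = (c^T *m (P *m y)) 0 0.
    move=> y; rewrite mulmxA -Psym -trmx_mul -/u mxE.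
    by apply: eq_bigr => i _; rewrite !mxE.
  by rewrite !E /P -!mulmxA Hx.
have n1x : forall s (x : 'cV[R]_n), box s x -> norm1 (W *m x) = \sum_i w i * x i 0.
  move=> s x bx; rewrite norm1E; apply: eq_bigr => i _.
  rewrite Wx ger0_norm // mulr_ge0 //; first exact/ltW/wpos.
  by case/andP: (bx i).
have xsbox : forall s, k <= s -> box s xs.
  move=> s ks i; rewrite xsE; case: ifP => _; first by rewrite ltW.
  by rewrite lexx (le_trans (ltW hk) ks).
have xsfeas : forall s, k <= s -> feas A xs s xs by move=> s ks; split => //; exact: xsbox.
have Nxs : norm1 (W *m xs) = \sum_i u i 0 * xs i 0.
  rewrite (n1x k xs (xsbox k (lexx k))); apply: eq_bigr => i _.
  by rewrite xsE; case: ifP => iJ; [rewrite uJ | rewrite !mulr0].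
have lb : forall s x, feas A xs s x -> norm1 (W *m xs) <= norm1 (W *m x).
  move=> s x [bx Ax]; rewrite (n1x s x bx) Nxs -(key x Ax).
  apply: ler_sum => i _; apply: ler_wpM2r => //.
  by case/andP: (bx i).
have hlb : forall s, has_lbound [set norm1 (W *m x) | x in feas A xs s].
  by move=> s; exists (norm1 (W *m xs)) => z [x'' hx'' <-]; exact: (lb _ _ hx'').
split.
  move=> s1 s2 [_ [x hx]] _ le12.
  apply: lb_le_inf; first by exists (norm1 (W *m x)); exists x.
  move=> y [x' hx' <-]; apply: ge_inf; first exact: hlb.
  exists x' => //; case: hx' => bx Ax; split => // i.
  by case/andP: (bx i) => a b; rewrite a /= (le_trans b le12).
split; last first.
  move=> s ks; apply/le_anti/andP; split.
    by apply: ge_inf; [exact: hlb | exists xs => //; exact: xsfeas].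
  apply: lb_le_inf; first by exists (norm1 (W *m xs)); exists xs => //; exact: xsfeas.
  by move=> y [x' hx' <-]; exact: (lb _ _ hx').
move=> s [s0 [x0 hx0]] sk.
pose eps := \big[Num.min/1]_(i | i \notin J) ((w i - u i 0) / w i).
have eps0 : 0 < eps.
  apply: (big_ind (fun x => 0 < x)) => //.
    by move=> a b ha hb; rewrite lt_min ha hb.
  move=> i iJ; apply: divr_gt0; last exact: wpos.
  by rewrite subr_gt0; exact: uJc.
have epsle : forall i, i \notin J -> eps * w i <= w i - u i 0.
  move=> i iJ.
  have : eps <= (w i - u i 0) / w i by rewrite /eps (bigD1 i) //= ge_min lexx.
  by rewrite ler_pdivlMr ?wpos.
pose SJ := \sum_(i in J) w i.
have SJ0 : 0 < SJ.
  case/set0Pn: hJ => j jJ; rewrite /SJ (bigD1 j) //=.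
  have : 0 <= \sum_(i in J | i != j) w i by apply: sumr_ge0 => i _; exact/ltW/wpos.
  by move: (wpos j); lra.
have main : forall x, feas A xs s x ->
    norm1 (W *m xs) + eps * ((k - s) * SJ) <= norm1 (W *m x).
  move=> x [bx Ax].
  have K := key x Ax.
  have xg0 : forall i, 0 <= x i 0 by move=> i; case/andP: (bx i).
  have xl : forall i, x i 0 <= s by move=> i; case/andP: (bx i).
  pose a := \sum_(i in J) w i * x i 0.
  pose b := \sum_(i | i \notin J) u i 0 * x i 0.
  pose cc := \sum_(i | i \notin J) w i * x i 0.
  pose Kk := \sum_(i in J) w i * k.
  have e1 : \sum_i u i 0 * x i 0 = a + b.
    rewrite (bigID (fun i => i \in J)) /=; congr (_ + _).
    by apply: eq_bigr => i iJ; rewrite uJ.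
  have e2 : \sum_i u i 0 * xs i 0 = Kk.
    rewrite (bigID (fun i => i \in J)) /= [X in _ + X]big1 ?addr0.
      by apply: eq_bigr => i iJ; rewrite uJ // xsE iJ.
    by move=> i iJ; rewrite xsE (negbTE iJ) mulr0.
  have e3 : norm1 (W *m x) = a + cc by rewrite (n1x s x bx) (bigID (fun i => i \in J)).
  have e4 : norm1 (W *m xs) = Kk by rewrite Nxs e2.
  have i1 : eps * cc <= cc - b.
    rewrite /cc /b -sumrB mulr_sumr; apply: ler_sum => i iJ.
    by rewrite mulrA -mulrBl; apply: ler_wpM2r => //; exact: epsle.
  have i2 : b <= cc by apply: ler_sum => i _; apply: ler_wpM2r.
  have i3 : (k - s) * SJ <= Kk - a.
    rewrite /Kk /a -sumrB /SJ mulr_sumr; apply: ler_sum => i _.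
    rewrite -mulrBr mulrC; apply: ler_wpM2l; first exact/ltW/wpos.
    by rewrite lerB.
  have i4 : eps * ((k - s) * SJ) <= eps * b.
    by apply: ler_wpM2l; [exact: ltW | move: i3 K e1 e2; lra].
  have i5 : eps * b <= eps * cc by apply: ler_wpM2l; [exact: ltW | ].
  rewrite e3 e4; move: i1 i4 i5 K e1 e2; lra.
apply: (@lt_le_trans _ _ (norm1 (W *m xs) + eps * ((k - s) * SJ))); last apply: lb_le_inf.
- by rewrite ltrDl; apply: mulr_gt0 => //; apply: mulr_gt0 => //; rewrite subr_gt0.
- by exists (norm1 (W *m x0)); exists x0.
- by move=> y [x' hx' <-]; exact: main.
Qed.
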